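(* Neither $\mathbf{X}_6$ nor $\mathbf{X}_7$ is mutation-equivalent to any of the nine graphs $\mathbf{E}_6,\mathbf{E}_7,\mathbf{E}_8,\widehat{\mathbf{E}}_6,\widehat{\mathbf{E}}_7,\widehat{\mathbf{E}}_8,\mathbf{E}_6^{(1,1)},\mathbf{E}_7^{(1,1)},\mathbf{E}_8^{(1,1)}$.
   Context: A graph here is a finite directed multigraph with no loops and no oriented $2$-cycles; multiple arrows in the same direction are allowed. The mutation $\mu_k\Gamma$ at a vertex $k$: for every pair of arrows $i\to k$, $k\to j$ add an arrow $i\to j$; reverse all arrows incident to $k$; then delete pairs of opposite arrows $i\to j$, $j\to i$ until no oriented $2$-cycles remain. Two graphs are mutation-equivalent if one is obtained from the other by a sequence of mutations and a relabeling of vertices. $\mathbf{X}_6$: vertices $x,w,y_1,z_1,y_2,z_2$; for $i=1,2$: two arrows $y_i\to z_i$, one arrow $z_i\to x$, one arrow $x\to y_i$; plus one arrow $w\to x$. $\mathbf{X}_7$: vertices $x,y_i,z_i$ ($i=1,2,3$); for each $i=1,2,3$: two arrows $y_i\to z_i$, one arrow $z_i\to x$, one arrow $x\to y_i$. For positive integers $a,b,c$ let $T(a,b,c)$ be the tree consisting of a central vertex $o$ and three paths (arms) attached to $o$ with $a$, $b$, $c$ further vertices respectively, every arrow being a single arrow directed toward $o$ (i.e. an arm $v_m\to v_{m-1}\to\cdots\to v_1\to o$). Then $\mathbf{E}_6=T(1,2,2)$, $\mathbf{E}_7=T(1,2,3)$, $\mathbf{E}_8=T(1,2,4)$, $\widehat{\mathbf{E}}_6=T(2,2,2)$,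 $\widehat{\mathbf{E}}_7=T(1,3,3)$, $\widehat{\mathbf{E}}_8=T(1,2,5)$. For nonnegative integers $(k_1,k_2,k_3)$ let $S(k_1,k_2,k_3)$ be the graph with vertices $a,b,p_1,p_2,p_3$ and, for each $i$, vertices $t^{(i)}_1,\dots,t^{(i)}_{k_i}$, with arrows: two arrows $b\to a$; for each $i$ a single arrow $a\to p_i$ and a single arrow $p_i\to b$; and single arrows $t^{(i)}_{k_i}\to\cdots\to t^{(i)}_1\to p_i$. Then $\mathbf{E}_6^{(1,1)}=S(1,1,1)$, $\mathbf{E}_7^{(1,1)}=S(2,0,2)$, $\mathbf{E}_8^{(1,1)}=S(1,0,4)$. *)

(* Defs.v *)
From mathcomp Require Import all_boot.
From Stdlib Require List.
Set Implicit Arguments. Unset Strict Implicit. Unset Printing Implicit Defensive.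

(* A (multi)graph on the vertex set 'I_n: Q i j = number of arrows i -> j.
   Graphs in the paper satisfy Q i i = 0 and (Q i j = 0 \/ Q j i = 0). *)
Definition quiver (n : nat) := 'I_n -> 'I_n -> nat.

Definition is_graph n (Q : quiver n) : Prop :=
  (forall i, Q i i = 0) /\ (forall i j, Q i j = 0 \/ Q j i = 0).

(* Mutation at k, literally: for i, j <> k add Q i k * Q k j arrows i -> j,
   reverse arrows at k, then cancel opposite pairs (truncated subtraction
   = number of i -> j arrows left after cancelling). *)
Definition mutate n (k : 'I_n) (Q : quiver n) : quiver n :=
  fun i j =>
    if (i == k) || (j == k) then Q j i
    else (Q i j + Q i k * Q k j) - (Q j i + Q j k * Q k i).

Definition mutate_seq n (ks : seq 'I_n) (Q : quiver n) : quiver n :=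
  foldl (fun P k => mutate k P) Q ks.

Definition pquiver := {n : nat & quiver n}.

Definition mutation_equivalent (G H : pquiver) : Prop :=
  exists (ks : seq 'I_(projT1 G)) (f : 'I_(projT1 H) -> 'I_(projT1 G)),
    bijective f /\
    forall i j, projT2 H i j = mutate_seq ks (projT2 G) (f i) (f j).

Definition of_arrows (n : nat) (s : seq (nat * nat)) : pquiver :=
  existT _ n (fun i j : 'I_n => count (pred1 (val i, val j)) s).

(* An arm v_l -> ... -> v_1 -> o with v_m numbered s + m. *)
Definition arm (s l o : nat) : seq (nat * nat) :=
  if l is 0 then [::]
  else (s.+1, o) :: [seq (s + m.+2, s + m.+1) | m <- iota 0 (l.-1)].

(* T(a,b,c): centre o = 0, arms numbered consecutively. *)
Definition Tgraph (a b c : nat) : pquiver :=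
  of_arrows (1 + a + b + c) (arm 0 a 0 ++ arm a b 0 ++ arm (a + b) c 0).

(* S(k1,k2,k3): a = 0, b = 1, p_i = i + 1, tails after. *)
Definition Sgraph (k1 k2 k3 : nat) : pquiver :=
  of_arrows (5 + k1 + k2 + k3)
    ([:: (1, 0); (1, 0); (0, 2); (2, 1); (0, 3); (3, 1); (0, 4); (4, 1)]
     ++ arm 4 k1 2 ++ arm (4 + k1) k2 3 ++ arm (4 + k1 + k2) k3 4).

(* X6: x=0, w=1, y1=2, z1=3, y2=4, z2=5. *)
Definition X6 : pquiver :=
  of_arrows 6 [:: (2, 3); (2, 3); (3, 0); (0, 2);
                  (4, 5); (4, 5); (5, 0); (0, 4); (1, 0)].

(* X7: x=0, y1=1, z1=2, y2=3, z2=4, y3=5, z3=6. *)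
Definition X7 : pquiver :=
  of_arrows 7 [:: (1, 2); (1, 2); (2, 0); (0, 1);
                  (3, 4); (3, 4); (4, 0); (0, 3);
                  (5, 6); (5, 6); (6, 0); (0, 5)].

Definition E6 := Tgraph 1 2 2.
Definition E7 := Tgraph 1 2 3.
Definition E8 := Tgraph 1 2 4.
Definition E6hat := Tgraph 2 2 2.
Definition E7hat := Tgraph 1 3 3.
Definition E8hat := Tgraph 1 2 5.
Definition E6_11 := Sgraph 1 1 1.
Definition E7_11 := Sgraph 2 0 2.
Definition E8_11 := Sgraph 1 0 4.

(* Main.v *)
Require Import Defs.
From mathcomp Require Import all_boot all_algebra.
From mathcomp Require Import zify.
Import GRing.Theory.
Set Implicit Arguments. Unset Strict Implicit. Unset Printing Implicit Defensive.
Local Open Scope ring_scope.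
Lemma natF2 (m n : nat) : (m %% 2 = n %% 2)%N -> (m%:R : 'F_2) = n%:R.
Proof. by move=> h; rewrite -(Fp_nat_mod (erefl true : prime 2) m) h Fp_nat_mod. Qed.

Definition Amx n (Q : quiver n) : 'M['F_2]_n := \matrix_(i, j) (Q i j + Q j i)%:R.
Definition Pmx n (k : 'I_n) (Q : quiver n) : 'M['F_2]_n :=
  \matrix_(a, b) (if a == k then (if b == k then 1 else (Q k b)%:R) else (a == b)%:R).

Lemma sumP n (k i : 'I_n) (u : 'F_2) (f : 'I_n -> 'F_2) :
  \sum_a (if a == k then u else (a == i)%:R) * f a = u * f k + (if i == k then 0 else f i).
Proof.
rewrite (bigD1 k) //= eqxx; congr (_ + _); case: eqP => [->|/eqP ne].
  by rewrite big1 // => a /negPf ->; rewrite mul0r.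
rewrite (bigD1 i ne) /=.
rewrite (negPf ne) eqxx mul1r big1 ?addr0 // => a /andP[/negPf -> /negPf ->].
by rewrite mul0r.
Qed.

Lemma PtM n (k : 'I_n) (Q : quiver n) (M : 'M['F_2]_n) i b :
  ((Pmx k Q)^T *m M) i b =
  (if i == k then 1 else (Q k i)%:R) * M k b + (if i == k then 0 else M i b).
Proof. rewrite mxE; under eq_bigr => a _ do rewrite !mxE; exact: sumP. Qed.

Lemma MP n (k : 'I_n) (Q : quiver n) (M : 'M['F_2]_n) i j :
  (M *m Pmx k Q) i j =
  (if j == k then 1 else (Q k j)%:R) * M i k + (if j == k then 0 else M i j).
Proof. rewrite mxE; under eq_bigr => a _ do rewrite !mxE mulrC; exact: sumP. Qed.

Lemma mutateE n (k : 'I_n) (Q : quiver n) :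
  Amx (mutate k Q) = (Pmx k Q)^T *m Amx Q *m Pmx k Q.
Proof.
apply/matrixP => i j; rewrite MP !PtM !mxE /mutate.
case: (eqVneq i k) => [->|ik]; case: (eqVneq j k) => [->|jk] //=;
  rewrite ?eqxx ?(negPf ik) ?(negPf jk) /=.
  all: rewrite ?mul1r ?addr0 -?natrM -?natrD -?natrM -?natrD; apply: natF2; nia.
Qed.
Lemma rank_mutate n (k : 'I_n) (Q : quiver n) :
  (\rank (Amx (mutate k Q)) <= \rank (Amx Q))%N.
Proof. rewrite mutateE; apply: leq_trans (mxrankM_maxl _ _) _; exact: mxrankM_maxr. Qed.

Lemma rank_mutate_seq n ks (Q : quiver n) :
  (\rank (Amx (mutate_seq ks Q)) <= \rank (Amx Q))%N.
Proof.
elim: ks Q => [|k ks IH] Q //=.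
exact: leq_trans (IH _) (rank_mutate _ _).
Qed.

Lemma rank_sub m m' n (f : 'I_m -> 'I_n) (g : 'I_m' -> 'I_n) (A : 'M['F_2]_n) :
  (\rank (\matrix_(i, j) A (f i) (g j)) <= \rank A)%N.
Proof.
have -> : \matrix_(i, j) A (f i) (g j) = rowsub f 1%:M *m A *m colsub g 1%:M.
  rewrite mul_rowsub_mx mul1mx mulmx_colsub mulmx1.
  by apply/matrixP => i j; rewrite !mxE.
apply: leq_trans (mxrankM_maxl _ _) _; exact: mxrankM_maxr.
Qed.

Lemma rank_equiv G H : mutation_equivalent G H ->
  (\rank (Amx (projT2 H)) <= \rank (Amx (projT2 G)))%N.
Proof.
case=> ks [f [_ hf]].
have -> : Amx (projT2 H) = \matrix_(i, j) Amx (mutate_seq ks (projT2 G)) (f i) (f j).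
  by apply/matrixP => i j; rewrite !mxE !hf.
exact: leq_trans (rank_sub _ _ _) (rank_mutate_seq _ _).
Qed.

Definition cnt (s : seq (nat * nat)) a b := count (pred1 (a, b)) s.

Definition star (a b : nat) : nat := (((a == 0%N) && (b != 0%N)) || ((a != 0%N) && (b == 0%N))).

Lemma upper n s :
  all (fun a => all (fun b => ((cnt s a b + cnt s b a) %% 2 == star a b)%N) (iota 0 n)) (iota 0 n) ->
  (\rank (Amx (projT2 (of_arrows n s))) <= 2)%N.
Proof.
move=> /allP h.
pose C : 'M['F_2]_(n, 2) := \matrix_(i, j) (if j == 0 then (val i == 0%N)%:R else (val i != 0%N)%:R).
pose D : 'M['F_2]_(2, n) := \matrix_(j, i) (if j == 0 then (val i != 0%N)%:R else (val i == 0%N)%:R).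
have -> : Amx (projT2 (of_arrows n s)) = C *m D.
  apply/matrixP => i j; rewrite !mxE !big_ord_recl big_ord0 !mxE /=.
  have mi : val i \in iota 0 n by rewrite mem_iota add0n (ltn_ord i).
  have mj : val j \in iota 0 n by rewrite mem_iota add0n (ltn_ord j).
  have /allP hi := h _ mi.
  have /eqP := hi _ mj.
  rewrite /cnt /star => e.
  rewrite -(Fp_nat_mod (erefl true : prime 2)) e.
  by case: (val i == 0%N); case: (val j == 0%N); rewrite /= ?mulr0 ?mul0r ?mulr1 ?addr0 ?add0r.
exact: leq_trans (mxrankM_maxr C D) (rank_leq_row D).
Qed.

Lemma lower n s (r c : seq nat) :
  all (fun x => x < n.+1)%N (r ++ c) ->
  all (fun a => all (fun b => ((cnt s (nth 0 r a) (nth 0 c b) + cnt s (nth 0 c b) (nth 0 r a)) %% 2 == (a == b))%N) (iota 0 3)) (iota 0 3) ->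
  (3 <= \rank (Amx (projT2 (of_arrows n.+1 s))))%N.
Proof.
move=> /allP hb /allP h.
have hn : forall t a, (forall x, x \in t -> x \in r ++ c) -> (nth 0 t a < n.+1)%N.
  move=> t a ht; case: (ltnP a (size t)) => ha.
    by apply: hb; apply: ht; exact: mem_nth.
  by rewrite nth_default.
pose R : 'I_3 -> 'I_n.+1 := fun a => inord (nth 0 r a).
pose K : 'I_3 -> 'I_n.+1 := fun b => inord (nth 0 c b).
have e : \matrix_(a, b) Amx (projT2 (of_arrows n.+1 s)) (R a) (K b) = 1%:M.
  have hr : forall a, (nth 0 r a < n.+1)%N by move=> a; apply: hn => x hx; rewrite mem_cat hx.
  have hc : forall a, (nth 0 c a < n.+1)%N by move=> a; apply: hn => x hx; rewrite mem_cat hx orbT.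
  apply/matrixP => a b; rewrite !mxE /R /K /= !inordK ?hr ?hc //.
  have ma : val a \in iota 0 3 by rewrite mem_iota add0n (ltn_ord a).
  have mb : val b \in iota 0 3 by rewrite mem_iota add0n (ltn_ord b).
  have /allP ha := h _ ma.
  have /eqP := ha _ mb.
  rewrite /cnt => ee.
  rewrite -(Fp_nat_mod (erefl true : prime 2)) ee.
  by [].
have := rank_sub R K (Amx (projT2 (of_arrows n.+1 s))).
by rewrite e mxrank1.
Qed.

Lemma X6up : (\rank (Amx (projT2 X6)) <= 2)%N.
Proof. by apply: upper. Qed.
Lemma X7up : (\rank (Amx (projT2 X7)) <= 2)%N.
Proof. by apply: upper. Qed.
Lemma E6lo : (3 <= \rank (Amx (projT2 E6)))%N.
Proof. by apply: (@lower 5 _ [:: 1; 3; 5] [:: 0; 2; 4]). Qed.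
Lemma E7lo : (3 <= \rank (Amx (projT2 E7)))%N.
Proof. by apply: (@lower 6 _ [:: 1; 3; 5] [:: 0; 2; 4]). Qed.
Lemma E8lo : (3 <= \rank (Amx (projT2 E8)))%N.
Proof. by apply: (@lower 7 _ [:: 1; 3; 5] [:: 0; 2; 4]). Qed.
Lemma E6hlo : (3 <= \rank (Amx (projT2 E6hat)))%N.
Proof. by apply: (@lower 6 _ [:: 2; 4; 6] [:: 1; 3; 5]). Qed.
Lemma E7hlo : (3 <= \rank (Amx (projT2 E7hat)))%N.
Proof. by apply: (@lower 7 _ [:: 1; 3; 6] [:: 0; 2; 5]). Qed.
Lemma E8hlo : (3 <= \rank (Amx (projT2 E8hat)))%N.
Proof. by apply: (@lower 8 _ [:: 1; 3; 5] [:: 0; 2; 4]). Qed.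
Lemma E611lo : (3 <= \rank (Amx (projT2 E6_11)))%N.
Proof. by apply: (@lower 7 _ [:: 5; 6; 7] [:: 2; 3; 4]). Qed.
Lemma E711lo : (3 <= \rank (Amx (projT2 E7_11)))%N.
Proof. by apply: (@lower 8 _ [:: 6; 8; 0] [:: 5; 7; 3]). Qed.
Lemma E811lo : (3 <= \rank (Amx (projT2 E8_11)))%N.
Proof. by apply: (@lower 9 _ [:: 5; 9; 6] [:: 2; 8; 4]). Qed.

From Stdlib Require List.

Theorem mainTheorem2 :
  forall G H : pquiver,
    List.In G [:: X6; X7] ->
    List.In H [:: E6; E7; E8; E6hat; E7hat; E8hat; E6_11; E7_11; E8_11] ->
    ~ mutation_equivalent G H.
Proof.
move=> G H hG hH /rank_equiv hr.
have hGu : (\rank (Amx (projT2 G)) <= 2)%N.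
  by case: hG => [<-|[<-|[]]]; [exact: X6up | exact: X7up].
have hHl : (3 <= \rank (Amx (projT2 H)))%N.
  repeat (case: hH => [<-|hH]); try (by case: hH).
  all: try (first [exact: E6lo | exact: E7lo | exact: E8lo | exact: E6hlo | exact: E7hlo
             | exact: E8hlo | exact: E611lo | exact: E711lo | exact: E811lo]).
by have := leq_trans hHl (leq_trans hr hGu).
Qed.
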